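(* Let $X$ be a Banach space with a normalized $1$-unconditional basis $(e_i)_{i=1}^\infty$. There exists $P\subseteq\mathbb{N}$ such that for all $k\in\mathbb{N}$, \[\psi_P(k)\geq\tfrac12(\psi(k)-1).\]
   Context: Identify finitely supported real sequences with elements of $X$ via $e_i$; for finite $A\subseteq\mathbb{N}$, $1_A=\sum_{i\in A}e_i$. Define $\psi(k)=\|1_{[1,k]}\|_X$ and, for $P\subseteq\mathbb{N}$ with complement $P^c=\mathbb{N}\setminus P$, $\psi_P(k)=\min\{\|1_{[1,k]\cap P}\|_X,\|1_{[1,k]\cap P^c}\|_X\}$. Normalized means $\|e_i\|_X=1$; $1$-unconditional means $\|\sum_{i=1}^n a_ie_i\|_X\le\|\sum_{i=1}^n b_ie_i\|_X$ whenever $|a_i|\le|b_i|$ for all $i$. (Standing assumption in the paper: the basis is not equivalent to the standard basis of $c_0$.) *)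

(* Defs.v *)
From HB Require Import structures.
From mathcomp Require Import all_boot all_order all_algebra.
From mathcomp Require Import all_classical all_reals all_analysis.
Set Implicit Arguments. Unset Strict Implicit. Unset Printing Implicit Defensive.
Import Order.TTheory GRing.Theory Num.Theory.
Import numFieldNormedType.Exports.
Local Open Scope classical_set_scope.
Local Open Scope ring_scope.

(* Convention: the paper's basis (e_i)_{i>=1} is represented by
   e : nat -> X with  e i  standing for e_{i+1}.  Hence the interval
   [1,k] of the paper corresponds to indices i < k here, and a subset
   P of the paper's N corresponds to a predicate on these shifted indices. *)

Definition is_basis (R : realType) (X : normedModType R) (e : nat -> X) :=
  forall x : X, exists! a : nat -> R,
    (fun n : nat => \sum_(i < n) a i *: e i) @ \oo --> x.

Definition normalized (R : realType) (X : normedModType R) (e : nat -> X) :=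
  forall i, `|e i| = 1.

Definition one_unconditional (R : realType) (X : normedModType R)
  (e : nat -> X) :=
  forall (n : nat) (a b : nat -> R),
    (forall i, (i < n)%N -> `|a i| <= `|b i|) ->
    `|\sum_(i < n) a i *: e i| <= `|\sum_(i < n) b i *: e i|.

Definition psi (R : realType) (X : normedModType R) (e : nat -> X) (k : nat)
  : R := `|\sum_(i < k) e i|.

Definition psiP (R : realType) (X : normedModType R) (e : nat -> X)
  (P : set nat) (k : nat) : R :=
  Num.min `|\sum_(i < k | `[< P i >]) e i|
          `|\sum_(i < k | ~~ `[< P i >]) e i|.

(* Main.v *)
Require Import Defs.
From HB Require Import structures.
From mathcomp Require Import all_boot all_order all_algebra.
From mathcomp Require Import all_classical all_reals all_analysis.
From mathcomp Require Import lra.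
Import Order.TTheory GRing.Theory Num.Theory.
Import numFieldNormedType.Exports.
Local Open Scope ring_scope.

Section S.
Variables (R : realType) (X : completeNormedModType R) (e : nat -> X).

Lemma sum_ind (k : nat) (c : nat -> bool) :
  \sum_(i < k | c i) e i = \sum_(i < k) ((c i)%:R : R) *: e i.
Proof.
rewrite big_mkcond; apply: eq_bigr => i _; case: (c i).
  by rewrite scale1r.
by rewrite scale0r.
Qed.

Lemma mono (k : nat) (c : nat -> bool) : one_unconditional e ->
  `|\sum_(i < k | c i) e i| <= `|\sum_(i < k | c i) e i + e k|.
Proof.
move=> hu.
have h1 : \sum_(i < k | c i) e i =
  \sum_(i < k.+1) ((((i < k)%N && c i))%:R : R) *: e i.
  rewrite big_ord_recr /= ltnn /= scale0r addr0 sum_ind.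
  by apply: eq_bigr => i _; rewrite ltn_ord.
have h2 : \sum_(i < k | c i) e i + e k =
  \sum_(i < k.+1) (((((i < k)%N && c i) || (i == k :> nat)))%:R : R) *: e i.
  rewrite big_ord_recr /= ltnn eqxx /= scale1r sum_ind.
  congr (_ + _); apply: eq_bigr => i _; rewrite ltn_ord /=.
  by rewrite (ltn_eqF (ltn_ord i)) orbF.
rewrite h2 h1; apply: (hu k.+1 (fun i => (((i < k)%N && c i))%:R) (fun i => (((i < k)%N && c i || (i == k)))%:R)) => i _.
by case: ((i < k)%N && c i); case: (i == k); rewrite ?normr1 ?normr0 ?ler01.
Qed.

Fixpoint st (k : nat) : X * X :=
  match k with
  | 0 => (0, 0)
  | k'.+1 => let (a, b) := st k' in
      if `|a| <= `|b| then (a + e k', b) else (a, b + e k')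
  end.

Definition Pb (i : nat) : bool := `|(st i).1| <= `|(st i).2|.

Lemma sum_rec k (c : nat -> bool) : \sum_(i < k.+1 | c i) e i =
  \sum_(i < k | c i) e i + (if c k then e k else 0).
Proof. by rewrite big_mkcond big_ord_recr /= -big_mkcond. Qed.

Lemma st_eq k : st k = (\sum_(i < k | Pb i) e i, \sum_(i < k | ~~ Pb i) e i).
Proof.
elim: k => [|k IH]; first by rewrite !big_ord0.
have hk : Pb k = (`|\sum_(i < k | Pb i) e i| <= `|\sum_(i < k | ~~ Pb i) e i|)
  by rewrite /Pb IH.
rewrite /= IH /= sum_rec (sum_rec k (fun i => ~~ Pb i)) /= hk.
by case: ifP => _ /=; rewrite ?addr0.
Qed.

Lemma arith (a b a' : R) : `|a - b| <= 1 -> a <= b -> a <= a' -> a' <= a + 1 ->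
  `|a' - b| <= 1.
Proof.
rewrite !ler_norml => /andP[h1 h2] h3 h4 h5; apply/andP; split; lra.
Qed.

Lemma inv k : one_unconditional e -> normalized e ->
  `| `|(st k).1| - `|(st k).2| | <= 1.
Proof.
move=> hu hn; elim: k => [|k IH]; first by rewrite /= normr0 subr0 normr0 ler01.
have Hk := st_eq k.
rewrite /=; case E: (st k) => [a b]; rewrite E /= in IH.
have tri : forall y : X, `|y + e k| <= `|y| + 1.
  by move=> y; rewrite -(hn k) ler_normD.
case: ifP => hab /=.
  have ha : a = \sum_(i < k | Pb i) e i by rewrite -[a]/((a, b).1) -E Hk.
  have m := @mono k Pb hu; rewrite -ha in m.
  exact: arith IH hab m (tri a).
have hb : b = \sum_(i < k | ~~ Pb i) e i by rewrite -[b]/((a, b).2) -E Hk.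
have m := @mono k (fun i => ~~ Pb i) hu; rewrite -hb in m.
move/negbT: hab; rewrite -ltNge => hab.
rewrite distrC; apply: arith (ltW hab) m (tri b).
by rewrite distrC.
Qed.

End S.

Lemma arith2 (R : realType) (a b p : R) : `|a - b| <= 1 -> p <= a + b ->
  (p - 1) / 2 <= Num.min a b.
Proof.
rewrite ler_norml => /andP[h1 h2] h3.
rewrite le_min; apply/andP; split; rewrite ler_pdivrMr //; lra.
Qed.

Theorem lemma3p1 (R : realType) (X : completeNormedModType R) (e : nat -> X) :
  is_basis e -> normalized e -> one_unconditional e ->
  exists P : set nat, forall k : nat,
    psiP e P k >= (psi e k - 1) / 2.
Proof.
move=> _ hn hu; exists (fun i => is_true (@Pb _ _ e i)) => k.
rewrite /psiP /psi.
have E1 : \sum_(i < k | `[< is_true (@Pb _ _ e i) >]) e i = \sum_(i < k | @Pb _ _ e i) e i.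
  by apply: eq_bigl => i; rewrite asboolb.
have E2 : \sum_(i < k | ~~ `[< is_true (@Pb _ _ e i) >]) e i = \sum_(i < k | ~~ @Pb _ _ e i) e i.
  by apply: eq_bigl => i; rewrite asboolb.
rewrite E1 E2.
have := @inv _ _ e k hu hn; rewrite (@st_eq _ _ e) /= => h.
apply: arith2 h _.
by rewrite (bigID (fun i : 'I_k => @Pb _ _ e i)) /= ler_normD.
Qed.
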